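(* Let $d\ge1$, $\epsilon>0$ and $\delta\ge0$ with $C_d\delta<1$. Then Mechanism-1 is unbiased: for every $x\in[-1,1]^d$, $\mathbb{E}[\mathcal{M}(x)]=x$ (coordinatewise).
   Context: Fix an integer $d\ge 1$. Let $C_d=2^{d-1}$ if $d$ is odd and $C_d=2^{d-1}-\frac12\binom{d}{d/2}$ if $d$ is even. For $B>0$ and $v\in\{-1,1\}^d$ let $T^+(v)=\{y\in\{-B,B\}^d: y\cdot v>0\}$, $T^-(v)=\{y\in\{-B,B\}^d: y\cdot v\le 0\}$. For $\alpha\in[0,1]$, $\mathcal{M}_{\alpha,B}$ takes $x\in[-1,1]^d$, samples $V\in\{-1,1\}^d$ with independent coordinates $\mathbb{P}[V_j=\pm1]=\frac12\pm\frac12x_j$, independently samples $u\in\{0,1\}$ with $\mathbb{P}[u=1]=\alpha$, and outputs a uniformly random element of $T^+(V)$ if $u=1$ and of $T^-(V)$ if $u=0$. Mechanism-1 with parameters $\epsilon>0,\delta\ge0$ is $\mathcal{M}=\mathcal{M}_{\alpha_{\epsilon,\delta},B_{\epsilon,\delta}}$ where $\alpha_{\epsilon,\delta}=\frac{e^\epsilon+C_d\delta}{e^\epsilon+1}$ if $d$ is odd and $\alpha_{\epsilon,\delta}=\frac{e^\epsilon C_d+\delta C_d(2^d-C_d)}{(e^\epsilon-1)C_d+2^d}$ if $d$ is even, and $B_{\epsilon,\delta}=\frac{2^d+C_d(e^\epsilon-1)}{\binom{d-1}{(d-1)/2}(e^\epsilon+2^d\delta-1)}$ if $d$ is odd, $B_{\epsilon,\delta}=\frac{2^d+C_d(e^\epsilon-1)}{\binom{d-1}{d/2}(e^\epsilon+2^d\delta-1)}$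 if $d$ is even. *)

(* Defs.v *)
From Stdlib Require Import Reals Lra Lia List Binomial.
Import ListNotations.
Open Scope R_scope.

Definition sumR (l : list R) : R := fold_right Rplus 0 l.

Fixpoint sign_vectors (d : nat) : list (list R) :=
  match d with
  | O => [nil]
  | S n => map (cons 1) (sign_vectors n) ++ map (cons (-1)) (sign_vectors n)
  end.

Definition cube (B : R) (d : nat) : list (list R) :=
  map (map (Rmult B)) (sign_vectors d).

Definition dot (u v : list R) : R :=
  sumR (map (fun p => fst p * snd p) (combine u v)).

Definition Tplus (B : R) (d : nat) (v : list R) : list (list R) :=
  filter (fun y => if Rlt_dec 0 (dot y v) then true else false) (cube B d).
Definition Tminus (B : R) (d : nat) (v : list R) : list (list R) :=
  filter (fun y => if Rlt_dec 0 (dot y v) then false else true) (cube B d).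

(* j-th coordinate of the mean of the uniform distribution on a finite list
   of (distinct) vectors. *)
Definition unif_mean (j : nat) (L : list (list R)) : R :=
  sumR (map (fun y => nth j y 0) L) / INR (length L).

(* P[V = v] when V_j are independent with P[V_j = +-1] = 1/2 +- x_j/2. *)
Definition probV (x v : list R) : R :=
  fold_right Rmult 1 (map (fun p => 1/2 + 1/2 * fst p * snd p) (combine x v)).

(* j-th coordinate of E[M_{alpha,B}(x)]. *)
Definition mech_mean (alpha B : R) (d : nat) (x : list R) (j : nat) : R :=
  sumR (map (fun v => probV x v *
              (alpha * unif_mean j (Tplus B d v)
               + (1 - alpha) * unif_mean j (Tminus B d v)))
            (sign_vectors d)).

Definition Cd (d : nat) : R :=
  if Nat.odd d then 2 ^ (d - 1)
  else 2 ^ (d - 1) - / 2 * C d (Nat.div d 2).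

Definition alpha_ed (d : nat) (eps delta : R) : R :=
  if Nat.odd d then (exp eps + Cd d * delta) / (exp eps + 1)
  else (exp eps * Cd d + delta * Cd d * (2 ^ d - Cd d))
       / ((exp eps - 1) * Cd d + 2 ^ d).

Definition B_ed (d : nat) (eps delta : R) : R :=
  if Nat.odd d then
    (2 ^ d + Cd d * (exp eps - 1))
    / (C (d - 1) (Nat.div (d - 1) 2) * (exp eps + 2 ^ d * delta - 1))
  else
    (2 ^ d + Cd d * (exp eps - 1))
    / (C (d - 1) (Nat.div d 2) * (exp eps + 2 ^ d * delta - 1)).

Definition mechanism1_mean (d : nat) (eps delta : R) (x : list R) (j : nat) : R :=
  mech_mean (alpha_ed d eps delta) (B_ed d eps delta) d x j.

(* Main.v *)
Require Import Defs.
From Stdlib Require Import Reals List Lra Lia Binomial Arith.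
Import ListNotations.
Open Scope R_scope.

Fixpoint Phi (m : nat) (f : R -> R) : R :=
  match m with
  | O => f 0
  | S m' => Phi m' (fun s => f (s + 1)) + Phi m' (fun s => f (s - 1))
  end.

Lemma Phi_ext m : forall f g, (forall s, f s = g s) -> Phi m f = Phi m g.
Proof.
  induction m as [|m IH]; intros f g H; simpl; [apply H|].
  f_equal; apply IH; intros; apply H.
Qed.

Lemma Phi_plus m : forall f g, Phi m (fun s => f s + g s) = Phi m f + Phi m g.
Proof.
  induction m as [|m IH]; intros f g; simpl; [reflexivity|].
  rewrite IH, IH. ring.
Qed.

Lemma Phi_scal m : forall c f, Phi m (fun s => c * f s) = c * Phi m f.
Proof.
  induction m as [|m IH]; intros c f; simpl; [reflexivity|].
  rewrite IH, IH. ring.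
Qed.

Lemma Phi_minus m f g : Phi m (fun s => f s - g s) = Phi m f - Phi m g.
Proof.
  rewrite (Phi_ext m _ (fun s => f s + (-1) * g s)) by (intros; ring).
  rewrite Phi_plus, Phi_scal. ring.
Qed.

Lemma Phi_const m : forall c, Phi m (fun _ => c) = 2 ^ m * c.
Proof.
  induction m as [|m IH]; intros c; simpl; [ring|].
  rewrite IH. ring.
Qed.

Lemma Phi_mono m : forall f g, (forall s, f s <= g s) -> Phi m f <= Phi m g.
Proof.
  induction m as [|m IH]; intros f g H; simpl; [apply H|].
  apply Rplus_le_compat; apply IH; intros; apply H.
Qed.

Lemma Phi_neg m : forall f, Phi m (fun s => f (- s)) = Phi m f.
Proof.
  induction m as [|m IH]; intros f; simpl.
  - rewrite Ropp_0; reflexivity.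
  - rewrite (Phi_ext m (fun s => f (- (s + 1))) (fun s => (fun t => f (t - 1)) (- s)))
      by (intros; f_equal; ring).
    rewrite (Phi_ext m (fun s => f (- (s - 1))) (fun s => (fun t => f (t + 1)) (- s)))
      by (intros; f_equal; ring).
    rewrite (IH (fun t => f (t - 1))), (IH (fun t => f (t + 1))). ring.
Qed.

Lemma Phi_supp m : forall f g,
  (forall k, (k <= m)%nat -> f (2 * INR k - INR m) = g (2 * INR k - INR m)) ->
  Phi m f = Phi m g.
Proof.
  induction m as [|m IH]; intros f g H; simpl.
  - specialize (H O (le_n _)). simpl in H. replace 0 with (2*0-0) by ring. exact H.
  - f_equal; apply IH; intros k Hk.
    + specialize (H (S k) ltac:(lia)). rewrite !S_INR in H.
      replace (2 * INR k - INR m + 1) with (2 * (INR k + 1) - (INR m + 1)) by ring. exact H.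
    + specialize (H k ltac:(lia)). rewrite !S_INR in H.
      replace (2 * INR k - INR m - 1) with (2 * INR k - (INR m + 1)) by ring. exact H.
Qed.

Definition dlt (b s : R) : R := if Req_EM_T s b then 1 else 0.

Lemma Phi_zero_out m b : (forall k, (k <= m)%nat -> 2 * INR k - INR m <> b) ->
  Phi m (dlt b) = 0.
Proof.
  intros H. rewrite (Phi_supp m _ (fun _ => 0)).
  - rewrite Phi_const; ring.
  - intros k Hk. unfold dlt. destruct Req_EM_T as [e|]; [exfalso; apply (H k Hk e)|auto].
Qed.

Lemma C_n0 n : C n 0 = 1.
Proof. unfold C. rewrite Nat.sub_0_r. change (fact 0) with 1%nat. simpl INR.
  field. apply INR_fact_neq_0. Qed.
Lemma C_nn n : C n n = 1.
Proof. unfold C. rewrite Nat.sub_diag. change (fact 0) with 1%nat. simpl INR.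
  field. apply INR_fact_neq_0. Qed.

Lemma Phi_dlt m : forall K, (K <= m)%nat -> Phi m (dlt (2 * INR K - INR m)) = C m K.
Proof.
  induction m as [|m IH]; intros K HK.
  - assert (K = O) by lia; subst. simpl. unfold dlt, C. simpl.
    destruct Req_EM_T; [field|lra].
  - rewrite S_INR. cbn [Phi].
    rewrite (Phi_ext m _ (dlt (2 * INR K - INR m - 2))) by
      (intros; unfold dlt; do 2 destruct Req_EM_T; auto; lra).
    rewrite (Phi_ext m (fun s => dlt _ (s - 1)) (dlt (2 * INR K - INR m))) by
      (intros; unfold dlt; do 2 destruct Req_EM_T; auto; lra).
    destruct K as [|K].
    + rewrite Phi_zero_out.
      2:{ intros k Hk. apply le_INR in Hk. pose proof (pos_INR k). simpl. lra. }
      rewrite (IH O ltac:(lia)). rewrite !C_n0. ring.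
    + destruct (Nat.eq_dec K m) as [->|HKm].
      * rewrite (Phi_zero_out m (2 * INR (S m) - INR m)).
        2:{ intros k Hk. apply le_INR in Hk. rewrite S_INR. lra. }
        replace (2 * INR (S m) - INR m - 2) with (2 * INR m - INR m) by (rewrite S_INR; ring).
        rewrite IH by lia. rewrite !C_nn. ring.
      * replace (2 * INR (S K) - INR m - 2) with (2 * INR K - INR m) by (rewrite S_INR; ring).
        rewrite !IH by lia. apply pascal. lia.
Qed.

Lemma sumR_app l1 l2 : sumR (l1 ++ l2) = sumR l1 + sumR l2.
Proof. induction l1; simpl; [ring|rewrite IHl1; ring]. Qed.

Lemma sumR_scal {A} (f : A -> R) c l : sumR (map (fun y => c * f y) l) = c * sumR (map f l).
Proof. induction l; simpl; [ring|rewrite IHl; ring]. Qed.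

Lemma sumR_plus {A} (f g : A -> R) l :
  sumR (map (fun y => f y + g y) l) = sumR (map f l) + sumR (map g l).
Proof. induction l; simpl; [ring|rewrite IHl; ring]. Qed.

Definition W (B : R) (d : nat) (F : list R -> R) : R := sumR (map F (cube B d)).

Lemma W_S B d F : W B (S d) F = W B d (fun y => F (B :: y)) + W B d (fun y => F (- B :: y)).
Proof.
  unfold W, cube. simpl. rewrite !map_app, !map_map, sumR_app.
  f_equal; f_equal; apply map_ext; intros; simpl; f_equal; f_equal; ring.
Qed.

Lemma W_ext B d F G : (forall y, F y = G y) -> W B d F = W B d G.
Proof. intros H; unfold W; f_equal; apply map_ext; auto. Qed.

Lemma dot_cons a y b v : dot (a :: y) (b :: v) = a * b + dot y v.
Proof. reflexivity. Qed.

Definition pm1 (v : list R) := Forall (fun t => t = 1 \/ t = -1) v.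

Lemma lemA B d : forall v phi, length v = d -> pm1 v ->
  W B d (fun y => phi (dot y v)) = Phi d (fun s => phi (B * s)).
Proof.
  induction d as [|d IH]; intros v phi Hl Hv.
  - unfold W; simpl. rewrite Rmult_0_r. unfold dot. simpl. ring.
  - destruct v as [|v0 v']; [discriminate|]. simpl in Hl. injection Hl as Hl.
    inversion Hv as [|? ? H0 Hv']; subst.
    rewrite W_S.
    rewrite (W_ext B _ _ (fun y => (fun s => phi (B * v0 + s)) (dot y v'))) by
      (intros; rewrite dot_cons; reflexivity).
    rewrite (W_ext B _ (fun y => phi (dot (- B :: y) (v0 :: v')))
       (fun y => (fun s => phi (- B * v0 + s)) (dot y v'))) by
      (intros; rewrite dot_cons; reflexivity).
    rewrite (IH v' (fun s => phi (B * v0 + s))), (IH v' (fun s => phi (- B * v0 + s))) by auto.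
    cbn [Phi].
    destruct H0 as [-> | ->].
    + f_equal; apply Phi_ext; intros; f_equal; ring.
    + rewrite Rplus_comm. f_equal; apply Phi_ext; intros; f_equal; ring.
Qed.

Lemma lemB B d : forall v phi j, length v = d -> pm1 v -> (j < d)%nat ->
  W B d (fun y => phi (dot y v) * nth j y 0) =
  B * nth j v 0 * Phi (d - 1) (fun s => phi (B * (s + 1)) - phi (B * (s - 1))).
Proof.
  induction d as [|d IH]; intros v phi j Hl Hv Hj; [lia|].
  destruct v as [|v0 v']; [discriminate|]. simpl in Hl. injection Hl as Hl.
  inversion Hv as [|? ? H0 Hv']; subst.
  rewrite W_S. simpl (S (length v') - 1)%nat. rewrite Nat.sub_0_r.
  destruct j as [|j].
  - simpl nth.
    rewrite (W_ext B _ _ (fun y => B * (fun s => phi (B * v0 + s)) (dot y v'))) by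
      (intros; rewrite dot_cons; simpl; ring).
    rewrite (W_ext B _ (fun y => phi (dot (- B :: y) (v0 :: v')) * nth 0 (- B :: y) 0)
       (fun y => (- B) * (fun s => phi (- B * v0 + s)) (dot y v'))) by
      (intros; rewrite dot_cons; simpl; ring).
    unfold W at 1 2. rewrite !sumR_scal. fold (W B (length v') (fun y => phi (B * v0 + dot y v'))).
    fold (W B (length v') (fun y => phi (- B * v0 + dot y v'))).
    rewrite (lemA B _ v' (fun s => phi (B * v0 + s))), (lemA B _ v' (fun s => phi (- B * v0 + s))) by auto. rewrite Phi_minus.
    destruct H0 as [-> | ->].
    + rewrite (Phi_ext _ (fun s => phi (B * 1 + B * s)) (fun s => phi (B * (s + 1)))) by
        (intros; f_equal; ring).
      rewrite (Phi_ext _ (fun s => phi (- B * 1 + B * s)) (fun s => phi (B * (s - 1)))) by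
        (intros; f_equal; ring). ring.
    + rewrite (Phi_ext _ (fun s => phi (B * -1 + B * s)) (fun s => phi (B * (s - 1)))) by
        (intros; f_equal; ring).
      rewrite (Phi_ext _ (fun s => phi (- B * -1 + B * s)) (fun s => phi (B * (s + 1)))) by
        (intros; f_equal; ring). ring.
  - simpl nth. destruct (length v') as [|d'] eqn:E; [lia|].
    rewrite (W_ext B _ _ (fun y => (fun s => phi (B * v0 + s)) (dot y v') * nth j y 0)) by
      (intros; rewrite dot_cons; reflexivity).
    rewrite (W_ext B _ (fun y => phi (dot (- B :: y) (v0 :: v')) * nth (S j) (- B :: y) 0)
       (fun y => (fun s => phi (- B * v0 + s)) (dot y v') * nth j y 0)) by
      (intros; rewrite dot_cons; reflexivity).
    rewrite (IH v' (fun s => phi (B * v0 + s))), (IH v' (fun s => phi (- B * v0 + s))) by (auto; lia). simpl (S d' - 1)%nat. rewrite Nat.sub_0_r. cbn [Phi].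
    destruct H0 as [-> | ->].
    + rewrite (Phi_ext _ (fun s => phi (B * 1 + B * (s + 1)) - phi (B * 1 + B * (s - 1)))
         (fun s => phi (B * (s + 1 + 1)) - phi (B * (s + 1 - 1)))) by
        (intros; f_equal; f_equal; ring).
      rewrite (Phi_ext _ (fun s => phi (- B * 1 + B * (s + 1)) - phi (- B * 1 + B * (s - 1)))
         (fun s => phi (B * (s - 1 + 1)) - phi (B * (s - 1 - 1)))) by
        (intros; f_equal; f_equal; ring). ring.
    + rewrite (Phi_ext _ (fun s => phi (B * -1 + B * (s + 1)) - phi (B * -1 + B * (s - 1)))
         (fun s => phi (B * (s - 1 + 1)) - phi (B * (s - 1 - 1)))) by
        (intros; f_equal; f_equal; ring).
      rewrite (Phi_ext _ (fun s => phi (- B * -1 + B * (s + 1)) - phi (- B * -1 + B * (s - 1)))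
         (fun s => phi (B * (s + 1 + 1)) - phi (B * (s + 1 - 1)))) by
        (intros; f_equal; f_equal; ring). ring.
Qed.

Lemma filter_len {A} (f : A -> bool) l :
  INR (length (filter f l)) = sumR (map (fun y => if f y then 1 else 0) l).
Proof. induction l; [reflexivity|]. cbn [filter map]; destruct (f a); cbn [length];
  [rewrite S_INR|]; rewrite IHl; unfold sumR; cbn [fold_right]; ring. Qed.

Lemma filter_sum {A} (f : A -> bool) g l :
  sumR (map g (filter f l)) = sumR (map (fun y => if f y then g y else 0) l).
Proof. induction l; simpl; [reflexivity|]. destruct (f a); simpl; rewrite IHl; ring. Qed.

Lemma sv_in d : forall v, In v (sign_vectors d) -> length v = d /\ pm1 v.
Proof.
  induction d as [|d IH]; intros v Hv; simpl in Hv.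
  - destruct Hv as [<-|[]]. split; [reflexivity|constructor].
  - apply in_app_or in Hv. destruct Hv as [Hv|Hv]; apply in_map_iff in Hv;
    destruct Hv as [w [<- Hw]]; apply IH in Hw; destruct Hw as [H1 H2];
    (split; [simpl; rewrite H1; reflexivity| constructor; auto]).
Qed.

Lemma probV_cons x0 x v0 v : probV (x0 :: x) (v0 :: v) = (1/2 + 1/2 * x0 * v0) * probV x v.
Proof. reflexivity. Qed.

Lemma prob_sum d : forall x, length x = d -> sumR (map (probV x) (sign_vectors d)) = 1.
Proof.
  induction d as [|d IH]; intros x Hx.
  - destruct x; [|discriminate]. unfold sumR, probV; simpl; ring.
  - destruct x as [|x0 x]; [discriminate|]. injection Hx as Hx. simpl.
    rewrite map_app, !map_map, sumR_app.
    rewrite (map_ext (fun y => probV (x0 :: x) (1 :: y)) (fun y => (1/2 + 1/2*x0*1) * probV x y))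
      by (intros; reflexivity).
    rewrite (map_ext (fun y => probV (x0 :: x) (-1 :: y)) (fun y => (1/2 + 1/2*x0*(-1)) * probV x y))
      by (intros; reflexivity).
    rewrite !sumR_scal, IH by auto. field.
Qed.

Lemma prob_mean d : forall x j, length x = d -> (j < d)%nat ->
  sumR (map (fun v => probV x v * nth j v 0) (sign_vectors d)) = nth j x 0.
Proof.
  induction d as [|d IH]; intros x j Hx Hj; [lia|].
  destruct x as [|x0 x]; [discriminate|]. injection Hx as Hx. simpl.
  rewrite map_app, !map_map, sumR_app.
  destruct j as [|j].
  - rewrite (map_ext (fun y => probV (x0 :: x) (1 :: y) * nth 0 (1 :: y) 0)
        (fun y => (1/2 + 1/2*x0*1) * probV x y)) by (intros; rewrite probV_cons; simpl; ring).
    rewrite (map_ext (fun y => probV (x0 :: x) (-1 :: y) * nth 0 (-1 :: y) 0)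
        (fun y => (-(1/2 + 1/2*x0*(-1))) * probV x y)) by (intros; rewrite probV_cons; simpl; ring).
    rewrite !sumR_scal, prob_sum by auto. simpl. field.
  - rewrite (map_ext (fun y => probV (x0 :: x) (1 :: y) * nth (S j) (1 :: y) 0)
        (fun y => (1/2 + 1/2*x0*1) * (probV x y * nth j y 0))) by (intros; rewrite probV_cons; simpl; ring).
    rewrite (map_ext (fun y => probV (x0 :: x) (-1 :: y) * nth (S j) (-1 :: y) 0)
        (fun y => (1/2 + 1/2*x0*(-1)) * (probV x y * nth j y 0))) by (intros; rewrite probV_cons; simpl; ring).
    rewrite !sumR_scal, IH by lia. simpl. field.
Qed.

Definition pp (x : R) : R := if Rlt_dec 0 x then 1 else 0.

Lemma pp_scal B x : 0 < B -> pp (B * x) = pp x.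
Proof.
  intros HB; unfold pp; do 2 destruct Rlt_dec; auto; exfalso.
  - apply n. apply Rnot_le_lt; intro. assert (B * x <= 0) by nra. lra.
  - apply n. nra.
Qed.

Lemma pp_01 x : 0 <= pp x <= 1.
Proof. unfold pp; destruct Rlt_dec; lra. Qed.

Lemma Np_eq d : (1 <= d)%nat -> Phi d pp = Cd d.
Proof.
  intros Hd.
  assert (Htot : 2 ^ d = 2 * Phi d pp + Phi d (dlt 0)).
  { rewrite <- (Rmult_1_r (2 ^ d)), <- Phi_const.
    rewrite (Phi_ext d (fun _ => 1) (fun s => (pp s + pp (- s)) + dlt 0 s)).
    2:{ intros s. unfold pp, dlt. do 2 destruct Rlt_dec; destruct Req_EM_T; lra. }
    rewrite Phi_plus, Phi_plus, (Phi_neg d pp). ring. }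
  assert (H2 : 2 ^ d = 2 * 2 ^ (d - 1)).
  { destruct d; [lia|]. simpl. rewrite Nat.sub_0_r. ring. }
  unfold Cd. destruct (Nat.Even_or_Odd d) as [[K HK]|[K HK]].
  - assert (Ho : Nat.odd d = false).
    { rewrite HK, <- Nat.negb_even, Nat.even_mul. reflexivity. }
    rewrite Ho.
    assert (Hdiv : Nat.div d 2 = K) by (rewrite HK, Nat.mul_comm; apply Nat.div_mul; lia).
    rewrite Hdiv.
    replace (dlt 0) with (dlt (2 * INR K - INR d)) in Htot.
    2:{ rewrite HK, mult_INR. simpl (INR 2). f_equal. ring. }
    rewrite Phi_dlt in Htot by lia. lra.
  - assert (Ho : Nat.odd d = true).
    { rewrite HK, Nat.add_comm, Nat.odd_add_mul_2. reflexivity. }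
    rewrite Ho. rewrite Phi_zero_out in Htot.
    + lra.
    + intros k Hk E. assert (INR (2 * k) = INR d).
      { rewrite mult_INR. simpl (INR 2). lra. }
      apply INR_eq in H. lia.
Qed.

Lemma C_pos n k : 0 < C n k.
Proof. unfold C. apply Rdiv_lt_0_compat; [apply INR_fact_lt_0|apply Rmult_lt_0_compat; apply INR_fact_lt_0]. Qed.

Lemma c_eq d : (1 <= d)%nat ->
  Phi (d - 1) (fun s => pp (s + 1) - pp (s - 1)) = C (d - 1) (Nat.div d 2).
Proof.
  intros Hd.
  assert (HdS : INR d = INR (d - 1) + 1).
  { destruct d; [lia|]. rewrite S_INR. simpl. rewrite Nat.sub_0_r. reflexivity. }
  set (m := (d - 1)%nat) in *. set (K := Nat.div d 2).
  assert (HKn : d = (2 * K)%nat \/ d = (2 * K + 1)%nat).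
  { destruct (Nat.Even_or_Odd d) as [[K' HK']|[K' HK']].
    - left. assert (K = K') by (unfold K; rewrite HK', Nat.mul_comm; apply Nat.div_mul; lia).
      lia.
    - right.
      assert (K = K').
      { unfold K; rewrite HK', Nat.mul_comm, Nat.div_add_l by lia. simpl. lia. }
      lia. }
  assert (HK : INR d = 2 * INR K \/ INR d = 2 * INR K + 1 /\ True).
  { destruct HKn as [E|E]; rewrite E; [left|right; split; [|exact I]];
    rewrite ?plus_INR, mult_INR; simpl; ring. }
  assert (HKm : (K <= m)%nat) by (unfold m; lia).
  rewrite <- (Phi_dlt m K HKm).
  apply Phi_supp. intros k Hk.
  unfold pp, dlt.
  destruct (lt_eq_lt_dec k K) as [[Hlt| ->]|Hgt].
  - assert (INR k + 1 <= INR K) by (rewrite <- S_INR; apply le_INR; lia).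
    repeat destruct Rlt_dec; repeat destruct Req_EM_T; destruct HK as [H'|[H' _]]; lra.
  - repeat destruct Rlt_dec; repeat destruct Req_EM_T; destruct HK as [H'|[H' _]]; lra.
  - assert (INR K + 1 <= INR k) by (rewrite <- S_INR; apply le_INR; lia).
    repeat destruct Rlt_dec; repeat destruct Req_EM_T; destruct HK as [H'|[H' _]]; lra.
Qed.

Lemma odd_div d : Nat.odd d = true -> Nat.div (d - 1) 2 = Nat.div d 2.
Proof.
  intros Ho. apply Nat.odd_spec in Ho. destruct Ho as [K ->].
  replace (2 * K + 1 - 1)%nat with (K * 2)%nat by lia.
  rewrite Nat.div_mul by lia.
  replace (2 * K + 1)%nat with (K * 2 + 1)%nat by lia.
  rewrite Nat.div_add_l by lia. simpl. lia.
Qed.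

Theorem lemma3 (d : nat) (eps delta : R) :
  (1 <= d)%nat -> 0 < eps -> 0 <= delta -> Cd d * delta < 1 ->
  forall x : list R, length x = d -> Forall (fun t => -1 <= t <= 1) x ->
  forall j : nat, (j < d)%nat ->
  mechanism1_mean d eps delta x j = nth j x 0.
Proof.
  intros Hd Heps Hdel _ x Hx _ j Hj.
  assert (He : 1 < exp eps) by (pose proof (exp_ineq1 eps ltac:(lra)); lra).
  assert (Hd1 : 1 <= INR d) by (apply le_INR in Hd; simpl in Hd; lra).
  assert (HN : Phi d pp = Cd d) by (apply Np_eq; auto).
  assert (HNpos : 1 <= Cd d).
  { rewrite <- HN, <- (C_nn d), <- (Phi_dlt d d (le_n d)).
    apply Phi_mono. intros s. unfold dlt, pp.
    destruct Req_EM_T; destruct Rlt_dec; lra. }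
  assert (HM : Phi d (fun s => 1 - pp s) = 2 ^ d - Cd d).
  { rewrite Phi_minus, Phi_const, HN. ring. }
  assert (HMpos : 1 <= 2 ^ d - Cd d).
  { apply Rle_trans with (C d 0); [rewrite C_n0; lra|].
    rewrite <- HM, <- (Phi_dlt d 0 (Nat.le_0_l d)).
    apply Phi_mono. intros s. unfold dlt, pp. simpl INR.
    destruct Req_EM_T; destruct Rlt_dec; lra. }
  set (c := C (d - 1) (Nat.div d 2)).
  assert (Hc : 0 < c) by apply C_pos.
  assert (Hceq : Phi (d - 1) (fun s => pp (s + 1) - pp (s - 1)) = c) by (apply c_eq; auto).
  assert (HDpos : 0 < 2 ^ d) by (apply pow_lt; lra).
  set (e := exp eps) in *.
  set (N := Cd d) in *. set (D := 2 ^ d) in *.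
  assert (HBeq : B_ed d eps delta = (D + N * (e - 1)) / (c * (e + D * delta - 1))).
  { unfold B_ed. destruct (Nat.odd d) eqn:Eo; [|reflexivity].
    rewrite odd_div by auto. reflexivity. }
  assert (HBpos : 0 < B_ed d eps delta).
  { rewrite HBeq. apply Rdiv_lt_0_compat; [nra|]. apply Rmult_lt_0_compat; nra. }
  assert (HK : B_ed d eps delta * c *
     (alpha_ed d eps delta / N - (1 - alpha_ed d eps delta) / (D - N)) = 1).
  { rewrite HBeq. unfold alpha_ed. fold e. change (Cd d) with N. change (2 ^ d) with D.
    destruct (Nat.odd d) eqn:Eo.
    - assert (HD2 : D = 2 * N).
      { unfold D, N, Cd. rewrite Eo. destruct d; [lia|]. simpl. rewrite Nat.sub_0_r. ring. }
      rewrite HD2. field. repeat split; nra.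
    - field. repeat split; nra. }
  set (al := alpha_ed d eps delta) in *. set (B := B_ed d eps delta) in *.
  unfold mechanism1_mean, mech_mean. fold al B.
  rewrite (map_ext_in _ (fun v => (B * c * (al / N - (1 - al) / (D - N))) * (probV x v * nth j v 0))).
  2:{ intros v Hv. apply sv_in in Hv. destruct Hv as [Hvl Hvp].
      unfold unif_mean, Tplus, Tminus.
      rewrite !filter_len, !filter_sum.
      rewrite (map_ext (fun y => if (if Rlt_dec 0 (dot y v) then true else false) then nth j y 0 else 0) (fun y => pp (dot y v) * nth j y 0))
        by (intros; unfold pp; destruct Rlt_dec; simpl; ring).
      rewrite (map_ext (fun y => if (if Rlt_dec 0 (dot y v) then true else false) then 1 else 0)
         (fun y => pp (dot y v)))
        by (intros; unfold pp; destruct Rlt_dec; simpl; ring).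
      rewrite (map_ext (fun y => if (if Rlt_dec 0 (dot y v) then false else true) then nth j y 0 else 0) (fun y => (1 - pp (dot y v)) * nth j y 0))
        by (intros; unfold pp; destruct Rlt_dec; simpl; ring).
      rewrite (map_ext (fun y => if (if Rlt_dec 0 (dot y v) then false else true) then 1 else 0)
         (fun y => (fun s => 1 - pp s) (dot y v)))
        by (intros; unfold pp; destruct Rlt_dec; simpl; ring).
      fold (W B d (fun y => pp (dot y v) * nth j y 0)).
      fold (W B d (fun y => pp (dot y v))).
      fold (W B d (fun y => (fun s => 1 - pp s) (dot y v) * nth j y 0)).
      fold (W B d (fun y => (fun s => 1 - pp s) (dot y v))).
      rewrite (lemB B d v pp j), (lemB B d v (fun s => 1 - pp s) j) by auto.
      rewrite (lemA B d v pp), (lemA B d v (fun s => 1 - pp s)) by auto.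
      rewrite (Phi_ext d (fun s => pp (B * s)) pp) by (intros; apply pp_scal; auto).
      rewrite (Phi_ext d (fun s => 1 - pp (B * s)) (fun s => 1 - pp s))
        by (intros; rewrite pp_scal; auto).
      rewrite (Phi_ext (d - 1) (fun s => pp (B * (s + 1)) - pp (B * (s - 1)))
          (fun s => pp (s + 1) - pp (s - 1))) by (intros; rewrite !pp_scal; auto).
      rewrite (Phi_ext (d - 1) (fun s => 1 - pp (B * (s + 1)) - (1 - pp (B * (s - 1))))
          (fun s => (-1) * (pp (s + 1) - pp (s - 1)))) by (intros; rewrite !pp_scal; auto; ring).
      rewrite Phi_scal, Hceq, HN, HM. fold N D.
      unfold Rdiv. ring. }
  rewrite sumR_scal, prob_mean by auto. rewrite HK. ring.
Qed.
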